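(* Let $\alpha\in(0,1]$, let $F\in C^{1,\alpha}_{\mathsf h}(\mathbb H,\mathbb R^2)$, let $p\in\mathbb H$ be a nondegenerate point for $F$, let $I\subseteq\mathbb R$ be an interval and let $\gamma:I\to\mathbb H$ be a solution to the level set differential equation (LSDE) associated to $F$ and $p$. Then there exist $\delta>0$ and $\varrho>0$ such that $$|t-s|^{1/2}\le \varrho\,\mathsf d(\gamma_s,\gamma_t)\quad\text{for all } s,t\in I \text{ with } |t-s|\le 2\delta.$$
   Context: The Heisenberg group $\mathbb H$ is $\mathbb R^3$ with product $(x^1,x^2,x^3)(y^1,y^2,y^3)=(x^1+y^1,x^2+y^2,x^3+y^3+x^1y^2-x^2y^1)$ (identity $0$, inverse $x^{-1}=-x$). For $x\in\mathbb H$ write $x^{\mathsf h}=(x^1,x^2)\in\mathbb R^2$, $x^{\mathsf v}=x^3$, $[x]^{\mathsf h}=|x^{\mathsf h}|$, $[x]^{\mathsf v}=\sqrt{|x^3|}$. Dilations are $\delta_r(x)=(rx^1,rx^2,r^2x^3)$. $\mathsf d$ is a fixed distance on $\mathbb H$ which is left-invariant ($\mathsf d(zx,zy)=\mathsf d(x,y)$) and $1$-homogeneous ($\mathsf d(\delta_rx,\delta_ry)=r\,\mathsf d(x,y)$); $B(x,r)$ denotes the open $\mathsf d$-ball. Horizontal vector fields: $X_1=\partial_1-x^2\partial_3$, $X_2=\partial_2+x^1\partial_3$. For $\alpha\in(0,1]$, $C^{1,\alpha}_{\mathsf h}(\mathbb H,\mathbb R^k)$ is the set of $F:\mathbb H\to\mathbb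 R^k$ such that $X_1F,X_2F$ exist everywhere and the horizontal Jacobian $\nabla_{\mathsf h}F=[X_1F,X_2F]$ (a $k\times2$ matrix) is $\alpha$-Hölder with respect to $\mathsf d$ on every bounded set. A point $p$ is nondegenerate for $F:\mathbb H\to\mathbb R^2$ if $\nabla_{\mathsf h}F(p)$ is invertible. Set $\mathrm R(x,y):=F(y)-F(x)-\nabla_{\mathsf h}F(x)\,(x^{-1}y)^{\mathsf h}$. LSDE: given $F\in C^{1,\alpha}_{\mathsf h}(\mathbb H,\mathbb R^2)$, $p$ nondegenerate and an interval $I$, a continuous $\gamma:I\to\mathbb H$ is a solution if for all $s,t\in I$: $(\gamma_s^{-1}\gamma_t)^{\mathsf h}=-\nabla_{\mathsf h}F(p)^{-1}(\mathrm R(p,\gamma_t)-\mathrm R(p,\gamma_s))$ and $(\gamma_s^{-1}\gamma_t)^{\mathsf v}=t-s+\mathbb E_{st}$, where $\mathbb E:I^2\to\mathbb R$ satisfies $\|\mathbb E\|:=\sup_{s\neq t}|\mathbb E_{st}|/|t-s|^{1+\alpha}<\infty$. *)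

(* Defs.v *)
From Stdlib Require Import Reals Lra.
Open Scope R_scope.

Record Hpt : Type := mkH { h1 : R; h2 : R; h3 : R }.

Definition hmul (x y : Hpt) : Hpt :=
  mkH (h1 x + h1 y) (h2 x + h2 y) (h3 x + h3 y + h1 x * h2 y - h2 x * h1 y).
Definition hinv (x : Hpt) : Hpt := mkH (- h1 x) (- h2 x) (- h3 x).
Definition h0 : Hpt := mkH 0 0 0.
Definition dil (r : R) (x : Hpt) : Hpt := mkH (r * h1 x) (r * h2 x) (r * r * h3 x).

Definition is_hom_distance (d : Hpt -> Hpt -> R) : Prop :=
  (forall x y, 0 <= d x y) /\
  (forall x y, d x y = 0 <-> x = y) /\
  (forall x y, d x y = d y x) /\
  (forall x y z, d x z <= d x y + d y z) /\
  (forall z x y, d (hmul z x) (hmul z y) = d x y) /\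
  (forall r x y, 0 < r -> d (dil r x) (dil r y) = r * d x y).

(* real power with the convention 0^a = 0 for a > 0 *)
Definition rpow (x a : R) : R := if Rle_dec x 0 then 0 else Rpower x a.

Definition map2 := Hpt -> (R * R)%type.

(* Horizontal derivatives: X1 G(x) = d/dt G(x (t,0,0)) at t=0,
   X2 G(x) = d/dt G(x (0,t,0)) at t=0 (these agree with
   X1 = d1 - x2 d3, X2 = d2 + x1 d3). *)
Definition is_X1 (G : Hpt -> R) (x : Hpt) (l : R) : Prop :=
  derivable_pt_lim (fun t => G (hmul x (mkH t 0 0))) 0 l.
Definition is_X2 (G : Hpt -> R) (x : Hpt) (l : R) : Prop :=
  derivable_pt_lim (fun t => G (hmul x (mkH 0 t 0))) 0 l.

Record mat2 : Type := mkM { m11 : R; m12 : R; m21 : R; m22 : R }.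

Definition is_hjac (F : map2) (J : Hpt -> mat2) : Prop :=
  forall x,
    is_X1 (fun y => fst (F y)) x (m11 (J x)) /\
    is_X2 (fun y => fst (F y)) x (m12 (J x)) /\
    is_X1 (fun y => snd (F y)) x (m21 (J x)) /\
    is_X2 (fun y => snd (F y)) x (m22 (J x)).

(* C^{1,alpha}_h(H,R^2), with J the horizontal Jacobian: J is alpha-Hoelder
   w.r.t. d on every bounded set (every d-ball centred at 0). *)
Definition C1alpha_h (d : Hpt -> Hpt -> R) (alpha : R) (F : map2) (J : Hpt -> mat2) : Prop :=
  is_hjac F J /\
  forall Rad, 0 < Rad -> exists C, forall x y, d h0 x < Rad -> d h0 y < Rad ->
     Rabs (m11 (J x) - m11 (J y)) <= C * rpow (d x y) alpha /\
     Rabs (m12 (J x) - m12 (J y)) <= C * rpow (d x y) alpha /\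
     Rabs (m21 (J x) - m21 (J y)) <= C * rpow (d x y) alpha /\
     Rabs (m22 (J x) - m22 (J y)) <= C * rpow (d x y) alpha.

Definition det2 (M : mat2) : R := m11 M * m22 M - m12 M * m21 M.
Definition nondegenerate (J : Hpt -> mat2) (p : Hpt) : Prop := det2 (J p) <> 0.

Definition mapply (M : mat2) (v : R * R) : R * R :=
  (m11 M * fst v + m12 M * snd v, m21 M * fst v + m22 M * snd v).
Definition minv (M : mat2) : mat2 :=
  mkM (m22 M / det2 M) (- m12 M / det2 M) (- m21 M / det2 M) (m11 M / det2 M).

Definition vsub (u v : R * R) : R * R := (fst u - fst v, snd u - snd v).
Definition vopp (u : R * R) : R * R := (- fst u, - snd u).
Definition hpart (x : Hpt) : R * R := (h1 x, h2 x).

Definition Rem (F : map2) (J : Hpt -> mat2) (x y : Hpt) : R * R :=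
  vsub (vsub (F y) (F x)) (mapply (J x) (hpart (hmul (hinv x) y))).

Definition is_interval (I : R -> Prop) : Prop :=
  forall a b c, I a -> I c -> a <= b <= c -> I b.

Definition cont_on (I : R -> Prop) (g : R -> Hpt) : Prop :=
  forall t, I t -> forall eps, 0 < eps -> exists del, 0 < del /\
    forall s, I s -> Rabs (s - t) < del ->
      Rabs (h1 (g s) - h1 (g t)) < eps /\ Rabs (h2 (g s) - h2 (g t)) < eps /\
      Rabs (h3 (g s) - h3 (g t)) < eps.

Definition LSDE_solution (alpha : R) (F : map2) (J : Hpt -> mat2) (p : Hpt)
    (I : R -> Prop) (g : R -> Hpt) : Prop :=
  cont_on I g /\
  exists E : R -> R -> R,
    (exists M, forall s t, I s -> I t -> s <> t ->
        Rabs (E s t) / rpow (Rabs (t - s)) (1 + alpha) <= M) /\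
    forall s t, I s -> I t ->
      hpart (hmul (hinv (g s)) (g t)) =
        vopp (mapply (minv (J p)) (vsub (Rem F J p (g t)) (Rem F J p (g s)))) /\
      h3 (hmul (hinv (g s)) (g t)) = t - s + E s t.

(* Main.v *)
Require Import Defs.
From Stdlib Require Import Reals Lra.
Open Scope R_scope.

Lemma hmul_inv_l x : hmul (hinv x) x = h0.
Proof. destruct x; unfold hmul, hinv, h0; simpl; f_equal; ring. Qed.
Lemma hmul_0_r x : hmul x h0 = x.
Proof. destruct x; unfold hmul, h0; simpl; f_equal; ring. Qed.
Lemma dil_0 r : dil r h0 = h0.
Proof. unfold dil, h0; simpl; f_equal; ring. Qed.

Section K.
Variable d : Hpt -> Hpt -> R.
Hypothesis Hd : is_hom_distance d.
Let e3 := mkH 0 0 1.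

Lemma dist_left x y : d x y = d h0 (hmul (hinv x) y).
Proof.
  destruct Hd as (_ & _ & _ & _ & Hl & _).
  rewrite <- (Hl (hinv x) x y), hmul_inv_l; reflexivity.
Qed.

Lemma k_pos : 0 < d h0 e3.
Proof.
  destruct Hd as (H0 & H1 & _).
  destruct (H0 h0 e3) as [h|h]; [exact h|].
  exfalso. symmetry in h. apply H1 in h. unfold h0, e3 in h. injection h. lra.
Qed.

Lemma vert t : d h0 (mkH 0 0 t) = sqrt (Rabs t) * d h0 e3.
Proof.
  destruct Hd as (H0 & H1 & Hs & Ht & Hl & Hh).
  destruct (Rtotal_order t 0) as [h|[h|h]].
  - assert (Hr : 0 < sqrt (-t)) by (apply sqrt_lt_R0; lra).
    assert (E : mkH 0 0 t = dil (sqrt (-t)) (mkH 0 0 (-1))).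
    { unfold dil; simpl; f_equal; try ring.
      rewrite sqrt_sqrt by lra; ring. }
    rewrite E. rewrite <- (dil_0 (sqrt (-t))) at 1. rewrite Hh by exact Hr.
    rewrite Rabs_left by exact h.
    f_equal.
    rewrite <- (Hl e3 h0 (mkH 0 0 (-1))), hmul_0_r.
    replace (hmul e3 (mkH 0 0 (-1))) with h0.
    + apply Hs.
    + unfold hmul, e3, h0; simpl; f_equal; ring.
  - subst. rewrite Rabs_R0, sqrt_0, Rmult_0_l.
    apply H1. reflexivity.
  - assert (Hr : 0 < sqrt t) by (apply sqrt_lt_R0; lra).
    assert (E : mkH 0 0 t = dil (sqrt t) e3).
    { unfold dil, e3; simpl; f_equal; try ring.
      rewrite sqrt_sqrt by lra; ring. }
    rewrite E. rewrite <- (dil_0 (sqrt t)) at 1. rewrite Hh by exact Hr.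
    rewrite Rabs_right by lra. reflexivity.
Qed.

Lemma key w : sqrt (2 * Rabs (h3 w)) * d h0 e3 <= 4 * d h0 w.
Proof.
  destruct Hd as (H0 & H1 & Hs & Ht & Hl & Hh).
  assert (A : d h0 (hmul w w) <= 2 * d h0 w).
  { pose proof (Ht h0 w (hmul w w)).
    assert (d w (hmul w w) = d h0 w).
    { rewrite <- (Hl w h0 w), hmul_0_r. reflexivity. }
    lra. }
  assert (B : d h0 (dil 2 w) = 2 * d h0 w).
  { rewrite <- (dil_0 2) at 1. apply Hh. lra. }
  assert (C : d (hmul w w) (dil 2 w) <= 4 * d h0 w).
  { pose proof (Ht (hmul w w) h0 (dil 2 w)). rewrite (Hs (hmul w w) h0) in H. lra. }
  rewrite dist_left in C.
  replace (hmul (hinv (hmul w w)) (dil 2 w)) with (mkH 0 0 (2 * h3 w)) in C.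
  - rewrite vert in C. rewrite Rabs_mult, (Rabs_right 2) in C by lra. exact C.
  - destruct w; unfold hmul, hinv, dil; simpl; f_equal; ring.
Qed.
End K.

Theorem mainTheorem1 :
  forall (d : Hpt -> Hpt -> R) (alpha : R) (F : map2) (J : Hpt -> mat2)
         (p : Hpt) (I : R -> Prop) (g : R -> Hpt),
    is_hom_distance d ->
    0 < alpha <= 1 ->
    C1alpha_h d alpha F J ->
    nondegenerate J p ->
    is_interval I ->
    LSDE_solution alpha F J p I g ->
    exists delta rho, 0 < delta /\ 0 < rho /\
      forall s t, I s -> I t -> Rabs (t - s) <= 2 * delta ->
        sqrt (Rabs (t - s)) <= rho * d (g s) (g t).
Proof.
  intros d alpha F J p I g Hd Ha _ _ _ [_ [E [[M HM] HE]]].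
  set (k := d h0 (mkH 0 0 1)).
  assert (Hk : 0 < k) by (apply k_pos; exact Hd).
  set (M' := Rmax M 1).
  assert (HM' : 0 < M') by (unfold M'; pose proof (Rmax_r M 1); lra).
  set (x := / (2 * M')).
  assert (Hx : 0 < x) by (unfold x; apply Rinv_0_lt_compat; lra).
  exists (Rpower x (/ alpha) / 2), (4 / k).
  assert (Hpd : 0 < Rpower x (/ alpha)) by (unfold Rpower; apply exp_pos).
  split; [lra|]. split; [unfold Rdiv; apply Rmult_lt_0_compat; [lra|apply Rinv_0_lt_compat; lra]|].
  intros s t Is It Hst.
  assert (Hdpos : 0 <= d (g s) (g t)) by (destruct Hd as (H0 & _); apply H0).
  destruct (Req_dec s t) as [->|hne].
  { replace (t - t) with 0 by ring. rewrite Rabs_R0, sqrt_0.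
    apply Rmult_le_pos; [unfold Rdiv; apply Rmult_le_pos; [lra|left; apply Rinv_0_lt_compat; lra]|lra]. }
  set (u := Rabs (t - s)).
  assert (Hu : 0 < u) by (unfold u; apply Rabs_pos_lt; intro; apply hne; lra).
  assert (HEb : Rabs (E s t) <= u / 2).
  { pose proof (HM s t Is It hne) as H. fold u in H.
    unfold rpow in H. destruct (Rle_dec u 0); [lra|].
    assert (HP : Rpower u (1 + alpha) = u * Rpower u alpha)
      by (rewrite Rpower_plus, Rpower_1 by exact Hu; ring).
    assert (Hpa : 0 < Rpower u alpha) by (unfold Rpower; apply exp_pos).
    assert (Hpow : Rpower u alpha <= x).
    { replace x with (Rpower (Rpower x (/ alpha)) alpha).
      - apply Rle_Rpower_l; [lra|]. unfold u in *; lra.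
      - rewrite Rpower_mult. replace (/ alpha * alpha) with 1 by (field; lra).
        apply Rpower_1; exact Hx. }
    rewrite HP in H.
    assert (HP0 : 0 < u * Rpower u alpha) by (apply Rmult_lt_0_compat; lra).
    apply (Rmult_le_compat_r (u * Rpower u alpha)) in H; [|lra].
    unfold Rdiv in H. rewrite Rmult_assoc, Rinv_l, Rmult_1_r in H by lra.
    assert (M <= M') by (unfold M'; apply Rmax_l).
    assert (M * (u * Rpower u alpha) <= M' * (u * Rpower u alpha))
      by (apply Rmult_le_compat_r; lra).
    assert (M' * (u * Rpower u alpha) <= M' * (u * x)).
    { apply Rmult_le_compat_l; [lra|]. apply Rmult_le_compat_l; lra. }
    assert (M' * (u * x) = u / 2) by (unfold x; field; lra).
    lra. }
  destruct (HE s t Is It) as [_ Hv].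
  set (w := hmul (hinv (g s)) (g t)) in Hv.
  assert (Hw : u <= 2 * Rabs (h3 w)).
  { rewrite Hv. unfold u in *.
    pose proof (Rabs_triang_inv (t - s) (- E s t)).
    rewrite Rabs_Ropp in H. replace (t - s - - E s t) with (t - s + E s t) in H by ring.
    lra. }
  pose proof (key d Hd w) as K. fold k in K.
  rewrite (dist_left d Hd). fold w.
  apply sqrt_le_1_alt in Hw.
  apply Rle_trans with (sqrt (2 * Rabs (h3 w))); [exact Hw|].
  apply (Rmult_le_reg_r k); [exact Hk|].
  replace (4 / k * d h0 w * k) with (4 * d h0 w) by (field; lra).
  exact K.
Qed.
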